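(* Let $G$ be a 0-1 strongly EFX-orientable graph. Then for every matching $M$ in $G$, the subgraph of $G$ induced by the set of vertices covered by $M$ contains an independent set of size $|M|$.
   Context: All graphs are finite and simple. For a graph $G=(V,E)$ and $v\in V$, $E(v)$ is the set of edges incident to $v$. A graphical instance on $G$ assigns to each vertex $v$ a valuation $f_v:2^E\to\mathbb{R}_{\ge 0}$ that is monotone and satisfies $f_v(X)=f_v(X\cap E(v))$ for all $X\subseteq E$. An orientation of $G$ chooses for each edge one of its endpoints as its head; vertex $v$ receives the bundle $X_v$ of edges whose head is $v$. The orientation is EFX if for all $u,v\in V$ and every $g\in X_v$, $f_u(X_u)\ge f_u(X_v\setminus\{g\})$. A graph $G$ is 0-1 strongly EFX-orientable if for every graphical instance on $G$ in which each $f_v$ is additive with $f_v(\{e\})\in\{0,1\}$ for all edges $e$, there exists an EFX orientation. *)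

(* Defs.v *)
From mathcomp Require Import all_boot.
Set Implicit Arguments. Unset Strict Implicit. Unset Printing Implicit Defensive.

Section Graphs.
Variable T : finType.

Definition simple_graph (adj : rel T) : Prop :=
  symmetric adj /\ irreflexive adj.

Definition edges (adj : rel T) : {set {set T}} :=
  [set a : {set T} | [exists x : T, exists y : T, adj x y && (a == [set x; y])]].

Definition orientation (adj : rel T) (head : {set T} -> T) : Prop :=
  forall a, a \in edges adj -> head a \in a.

Definition bundle (adj : rel T) (head : {set T} -> T) (v : T) : {set {set T}} :=
  [set a in edges adj | head a == v].

(* A 0-1 additive graphical valuation: w u a in {0,1} is f_u({a}) for an
   edge a incident to u; f_u(X) = sum of w u a over edges of X incident to u
   (so f_u(X) = f_u(X ∩ E(u)), and f_u is additive, hence monotone). *)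
Definition val01 (w : T -> {set T} -> bool) (u : T) (X : {set {set T}}) : nat :=
  \sum_(a in X | u \in a) w u a.

Definition EFX (adj : rel T) (w : T -> {set T} -> bool) (head : {set T} -> T) : Prop :=
  forall u v g, g \in bundle adj head v ->
    val01 w u (bundle adj head v :\ g) <= val01 w u (bundle adj head u).

Definition strongly_EFX_orientable_01 (adj : rel T) : Prop :=
  forall w : T -> {set T} -> bool,
    exists head, orientation adj head /\ EFX adj w head.

Definition matching (adj : rel T) (M : {set {set T}}) : Prop :=
  M \subset edges adj /\
  {in M &, forall a b : {set T}, a != b -> [disjoint a & b]}.

Definition covered (M : {set {set T}}) : {set T} := \bigcup_(a in M) a.

Definition independent (adj : rel T) (S : {set T}) : Prop :=
  {in S &, forall x y : T, ~~ adj x y}.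

End Graphs.

(* Main.v *)
Require Import Defs.
From mathcomp Require Import all_boot.

Section Aux.
Variable T : finType.
Variable adj : rel T.
Hypothesis Hsg : simple_graph adj.
Variable M : {set {set T}}.
Hypothesis HM : matching adj M.
Variable head : {set T} -> T.
Hypothesis Hor : orientation adj head.
Hypothesis Hefx : EFX adj (fun u a => a \in M) head.

Lemma inM_edge e : e \in M -> exists x y, [/\ adj x y, x != y & e = [set x; y]].
Proof.
move=> eM; have := subsetP HM.1 _ eM; rewrite inE => /existsP[x /existsP[y /andP[axy /eqP ->]]].
exists x, y; split=> //; apply/negP=> /eqP exy; move: axy; rewrite exy.
by rewrite Hsg.2.
Qed.

Lemma M_uniq a e u : a \in M -> e \in M -> u \in a -> u \in e -> a = e.
Proof.
move=> aM eM ua ue; apply/eqP; apply/negP=> /negP ne.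
by have := disjointFr (HM.2 _ _ aM eM ne) ua; rewrite ue.
Qed.

Lemma headM e : e \in M -> head e \in e.
Proof. by move=> eM; apply: Hor; apply: (subsetP HM.1). Qed.

Lemma bundle_single e g : e \in M -> g \in bundle adj head (head e) -> g = e.
Proof.
move=> eM gb; apply/eqP; apply/negP=> /negP ne.
have [x [y [axy nxy ee]]] := inM_edge e eM.
have he := headM e eM.
have [h Hh] : {h | head e = h} by exists (head e).
rewrite Hh in he gb.
pose u := if h == x then y else x.
have ue : u \in e by rewrite /u ee; case: ifP; rewrite !inE eqxx ?orbT.
have uh : u != h.
  move: he; rewrite /u ee !inE; case: (eqVneq h x) => [->|hx] /=.
  - by move=> _; rewrite eq_sym.
  - by move=> _; rewrite eq_sym.
have := Hefx u h g gb.
have -> : val01 (fun u a => a \in M) u (bundle adj head u) = 0.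
  rewrite /val01; apply: big1 => a /andP[ab ua].
  case aM: (a \in M) => //.
  have ae := M_uniq _ _ _ aM eM ua ue; move: ab; rewrite /bundle inE ae => /andP[_ /eqP hu].
  by rewrite -Hh hu eqxx in uh.
have eb : e \in bundle adj head h :\ g.
  by rewrite in_setD1 eq_sym ne /bundle inE -Hh eqxx (subsetP HM.1 _ eM).
rewrite /val01 (bigD1 e) /=; last by rewrite eb ue.
by rewrite eM.
Qed.

End Aux.

Theorem mainTheorem2 (T : finType) (adj : rel T) :
  simple_graph adj ->
  strongly_EFX_orientable_01 adj ->
  forall M : {set {set T}}, matching adj M ->
  exists S : {set T},
    [/\ S \subset covered M, independent adj S & #|S| = #|M|].
Proof.
move=> Hsg Hefx M HM.
have [head [Hor He]] := Hefx (fun u a => a \in M).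
have hd : forall e, e \in M -> head e \in e by move=> e eM; exact: (@headM _ _ _ HM _ Hor e eM).
exists (head @: M); split.
- apply/subsetP=> x /imsetP[e eM ->]; apply/bigcupP; exists e => //; exact: hd.
- move=> x y /imsetP[e eM ->] /imsetP[f fM ->]; apply/negP=> axy.
  have ae : [set head e; head f] \in edges adj.
    by rewrite inE; apply/existsP; exists (head e); apply/existsP; exists (head f); rewrite axy eqxx.
  have ha := Hor _ ae.
  have key : forall e f, e \in M -> f \in M -> adj (head e) (head f) ->
      head [set head e; head f] = head e -> False.
    move=> e1 f1 e1M f1M a1 h1.
    have a1e : [set head e1; head f1] \in edges adj.
      by rewrite inE; apply/existsP; exists (head e1); apply/existsP; exists (head f1); rewrite a1 eqxx.
    have := @bundle_single _ _ Hsg _ HM _ Hor He e1 [set head e1; head f1] e1M.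
    rewrite inE a1e h1 eqxx => /(_ isT) eq1.
    have hfe : head f1 \in e1 by rewrite -eq1 !inE eqxx orbT.
    have := @M_uniq _ _ _ HM _ _ _ f1M e1M (hd _ f1M) hfe => fe; move: a1; rewrite fe.
    by rewrite Hsg.2.
  move: ha; rewrite !inE => /orP[/eqP h|/eqP h].
  + exact: (key e f eM fM axy h).
  + have ayx : adj (head f) (head e) by rewrite Hsg.1.
    apply: (key f e fM eM ayx); by rewrite setUC.
- apply: card_in_imset => e f eM fM hef.
  by apply: (@M_uniq _ _ _ HM _ _ _ eM fM (hd _ eM)); rewrite hef hd.
Qed.
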